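(* Let $K\ge 1$, $c>0$, $P_{\max}>0$, and for $k,k'\in\{1,\dots,K\}$ let $a_{k,k'}\ge 0$, $d_k\ge 0$, $n_k>0$ with $a_{k,k}\ge d_k$, and $\gamma_k\ge 0$. Define on $[0,\infty)^K$ $$f_k(\mathbf{P})=\log_2\Big(\sum_{k'}a_{k,k'}P_{k'}+n_k\Big),\quad g_k(\mathbf{P})=\log_2\Big(\sum_{k'}a_{k,k'}P_{k'}-d_kP_k+n_k\Big),\quad R_k=c\,(f_k-g_k),$$ the first-order Taylor expansions at $\mathbf{P}_0$ $$\hat f_k(\mathbf{P},\mathbf{P}_0)=f_k(\mathbf{P}_0)+\frac{\sum_{k'}a_{k,k'}(P_{k'}-P_{0,k'})}{\ln 2\,(\sum_{k'}a_{k,k'}P_{0,k'}+n_k)},\quad \hat g_k(\mathbf{P},\mathbf{P}_0)=g_k(\mathbf{P}_0)+\frac{\sum_{k'}a_{k,k'}(P_{k'}-P_{0,k'})-d_k(P_k-P_{0,k})}{\ln 2\,(\sum_{k'}a_{k,k'}P_{0,k'}-d_kP_{0,k}+n_k)},$$ $\hat R_k(\mathbf{P},\mathbf{P}_0)=c(\hat f_k(\mathbf{P},\mathbf{P}_0)-g_k(\mathbf{P}))$, $\overline R_k(\mathbf{P},\mathbf{P}_0)=c(f_k(\mathbf{P})-\hat g_k(\mathbf{P},\mathbf{P}_0))$, $P_{\mathrm N}(\mathbf{P},x)=C_0+\sum_k\Delta_kP_k+\sum_k\beta_kx_k$ with $C_0>0$, $\Delta_k\ge1$, $\beta_k>0$,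 $$\mathrm{EE}(\mathbf{P})=\frac{\sum_kR_k(\mathbf{P})}{P_{\mathrm N}(\mathbf{P},(R_k(\mathbf{P}))_k)},\qquad \overline{\mathrm{EE}}(\mathbf{P},\mathbf{P}_0)=\frac{\sum_k\overline R_k(\mathbf{P},\mathbf{P}_0)}{P_{\mathrm N}(\mathbf{P},(\hat R_k(\mathbf{P},\mathbf{P}_0))_k)}.$$ Let $\mathcal F=\{\mathbf P: 0\le P_k\le P_{\max},\ \gamma_k(\sum_{k'}a_{k,k'}P_{k'}+n_k)-(1+\gamma_k)d_kP_k\le 0\ \ \forall k\}$, assumed nonempty. The Successive Lower-Bound Maximization (SLM) algorithm starts from some $\mathbf P^{(0)}\in\mathcal F$ and iterates $\mathbf P^{(n)}\in\arg\max_{\mathbf P\in\mathcal F}\overline{\mathrm{EE}}(\mathbf P,\mathbf P^{(n-1)})$. Then every limit point of the iterates $(\mathbf P^{(n)})$ generated by the SLM algorithm is a stationary point of the problem $\max_{\mathbf P\in\mathcal F}\mathrm{EE}(\mathbf P)$, and the SLM algorithm is globally convergent.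
   Context: Model: uplink network with $K$ users, $P_k$ the transmit power of user $k$; $c=\tau_uB/(\tau_u+\tau_p)$, $a_{k,k'}=\mathbb{E}\{|\mathrm{IS}_{k,k'}|^2\}$, $d_k=|\mathbb{E}\{\mathrm{DS}_k\}|^2$, $n_k$ effective noise power; $R_k$ is the rate of user $k$; $P_{\mathrm N}$ is the total network power (affine in the rates with positive coefficients); the constraint defining $\mathcal F$ is the QoS constraint $R_k\ge R_{k,\min}$ rewritten linearly with $\gamma_k=2^{\tau_cR_{k,\min}/(\tau_uB)}-1$. A stationary point of $\max_{\mathbf P\in\mathcal F}\mathrm{EE}(\mathbf P)$ is a point $\mathbf P^*\in\mathcal F$ with $\nabla\mathrm{EE}(\mathbf P^* )^{\top}(\mathbf P-\mathbf P^* )\le 0$ for all $\mathbf P\in\mathcal F$. ''Globally convergent'' means the stated limit-point property holds for any feasible initial point. *)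

(* Defs.v *)
From Stdlib Require Import Reals Lra List.
From Coquelicot Require Import Coquelicot.
Open Scope R_scope.

(* Vectors in R^K are represented as functions nat -> R; only the
   indices 0..K-1 are meaningful (users k = 1..K of the paper). *)

Definition sumK (K : nat) (f : nat -> R) : R :=
  fold_right Rplus 0 (map f (seq 0 K)).

Definition log2 (x : R) : R := ln x / ln 2.

Definition f_k (K : nat) (a : nat -> nat -> R) (n : nat -> R)
  (P : nat -> R) (k : nat) : R :=
  log2 (sumK K (fun k' => a k k' * P k') + n k).

Definition g_k (K : nat) (a : nat -> nat -> R) (d n : nat -> R)
  (P : nat -> R) (k : nat) : R :=
  log2 (sumK K (fun k' => a k k' * P k') - d k * P k + n k).

Definition R_k (K : nat) (c : R) (a : nat -> nat -> R) (d n : nat -> R)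
  (P : nat -> R) (k : nat) : R :=
  c * (f_k K a n P k - g_k K a d n P k).

Definition fhat_k (K : nat) (a : nat -> nat -> R) (n : nat -> R)
  (P P0 : nat -> R) (k : nat) : R :=
  f_k K a n P0 k +
  sumK K (fun k' => a k k' * (P k' - P0 k')) /
    (ln 2 * (sumK K (fun k' => a k k' * P0 k') + n k)).

Definition ghat_k (K : nat) (a : nat -> nat -> R) (d n : nat -> R)
  (P P0 : nat -> R) (k : nat) : R :=
  g_k K a d n P0 k +
  (sumK K (fun k' => a k k' * (P k' - P0 k')) - d k * (P k - P0 k)) /
    (ln 2 * (sumK K (fun k' => a k k' * P0 k') - d k * P0 k + n k)).

Definition Rhat_k (K : nat) (c : R) (a : nat -> nat -> R) (d n : nat -> R)
  (P P0 : nat -> R) (k : nat) : R :=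
  c * (fhat_k K a n P P0 k - g_k K a d n P k).

Definition Rbar_k (K : nat) (c : R) (a : nat -> nat -> R) (d n : nat -> R)
  (P P0 : nat -> R) (k : nat) : R :=
  c * (f_k K a n P k - ghat_k K a d n P P0 k).

Definition PN (K : nat) (C0 : R) (Delta beta : nat -> R)
  (P x : nat -> R) : R :=
  C0 + sumK K (fun k => Delta k * P k) + sumK K (fun k => beta k * x k).

Definition EE (K : nat) (c : R) (a : nat -> nat -> R) (d n : nat -> R)
  (C0 : R) (Delta beta : nat -> R) (P : nat -> R) : R :=
  sumK K (fun k => R_k K c a d n P k) /
  PN K C0 Delta beta P (fun k => R_k K c a d n P k).

Definition EEbar (K : nat) (c : R) (a : nat -> nat -> R) (d n : nat -> R)
  (C0 : R) (Delta beta : nat -> R) (P P0 : nat -> R) : R :=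
  sumK K (fun k => Rbar_k K c a d n P P0 k) /
  PN K C0 Delta beta P (fun k => Rhat_k K c a d n P P0 k).

Definition feasible (K : nat) (Pmax : R) (a : nat -> nat -> R)
  (d n gam : nat -> R) (P : nat -> R) : Prop :=
  forall k, (k < K)%nat ->
    0 <= P k <= Pmax /\
    gam k * (sumK K (fun k' => a k k' * P k') + n k)
      - (1 + gam k) * d k * P k <= 0.

Definition upd (x : nat -> R) (k : nat) (t : R) : nat -> R :=
  fun j => if Nat.eqb j k then t else x j.

Definition partial (F : (nat -> R) -> R) (x : nat -> R) (k : nat) : R :=
  Derive (fun t => F (upd x k t)) (x k).

Definition stationary (K : nat) (Fs : (nat -> R) -> Prop)
  (F : (nat -> R) -> R) (Pst : nat -> R) : Prop :=
  Fs Pst /\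
  forall P, Fs P -> sumK K (fun k => partial F Pst k * (P k - Pst k)) <= 0.

Definition is_argmax_on (Fs : (nat -> R) -> Prop) (f : (nat -> R) -> R)
  (x : nat -> R) : Prop :=
  Fs x /\ forall y, Fs y -> f y <= f x.

Definition limit_point (K : nat) (Pseq : nat -> nat -> R) (Pst : nat -> R) : Prop :=
  forall eps : R, 0 < eps -> forall N : nat, exists m : nat, (N <= m)%nat /\
    forall k, (k < K)%nat -> Rabs (Pseq m k - Pst k) < eps.

(* Main.v *)
Require Import Defs.
From Stdlib Require Import Reals Lra List Arith Lia FunctionalExtensionality.
From Coquelicot Require Import Coquelicot.
Open Scope R_scope.

Lemma fold_Rplus_acc (l : list R) (a : R) :
  fold_right Rplus a l = fold_right Rplus 0 l + a.
Proof. induction l; simpl; [lra | rewrite IHl; lra]. Qed.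

Lemma sumK_0 f : sumK 0 f = 0.
Proof. reflexivity. Qed.

Lemma sumK_S n f : sumK (S n) f = sumK n f + f n.
Proof.
  unfold sumK. rewrite seq_S, map_app, fold_right_app. simpl.
  rewrite fold_Rplus_acc. lra.
Qed.

Lemma sumK_ext n f g : (forall k, (k < n)%nat -> f k = g k) -> sumK n f = sumK n g.
Proof.
  induction n; intros H; [reflexivity|]. rewrite !sumK_S, IHn, H; auto.
Qed.

Lemma sumK_plus n f g : sumK n (fun k => f k + g k) = sumK n f + sumK n g.
Proof. induction n; [rewrite ?sumK_0; lra|]. rewrite !sumK_S, IHn; lra. Qed.

Lemma sumK_minus n f g : sumK n (fun k => f k - g k) = sumK n f - sumK n g.
Proof. induction n; [rewrite ?sumK_0; lra|]. rewrite !sumK_S, IHn; lra. Qed.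

Lemma sumK_scal n (c : R) f : sumK n (fun k => c * f k) = c * sumK n f.
Proof. induction n; [rewrite ?sumK_0; lra|]. rewrite !sumK_S, IHn; lra. Qed.

Lemma sumK_scalr n (c : R) f : sumK n (fun k => f k * c) = sumK n f * c.
Proof. induction n; [rewrite ?sumK_0; lra|]. rewrite !sumK_S, IHn; lra. Qed.

Lemma sumK_zero n : sumK n (fun _ => 0) = 0.
Proof. induction n; [reflexivity|]. rewrite sumK_S, IHn; lra. Qed.

Lemma sumK_le n f g : (forall k, (k < n)%nat -> f k <= g k) -> sumK n f <= sumK n g.
Proof.
  induction n; intros H; [rewrite ?sumK_0; lra|]. rewrite !sumK_S.
  assert (f n <= g n) by auto. assert (sumK n f <= sumK n g) by auto. lra.
Qed.

Lemma sumK_nonneg n f : (forall k, (k < n)%nat -> 0 <= f k) -> 0 <= sumK n f.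
Proof. intros H. rewrite <- (sumK_zero n). apply sumK_le; auto. Qed.

Lemma sumK_ge_term n f j : (forall k, (k < n)%nat -> 0 <= f k) -> (j < n)%nat ->
  f j <= sumK n f.
Proof.
  induction n; intros H Hj; [lia|]. rewrite sumK_S.
  destruct (Nat.eq_dec j n).
  - subst. assert (0 <= sumK n f) by (apply sumK_nonneg; auto). lra.
  - assert (f j <= sumK n f) by (apply IHn; auto; lia). assert (0 <= f n) by auto. lra.
Qed.

Lemma sumK_exchange n m (F : nat -> nat -> R) :
  sumK n (fun j => sumK m (fun k => F j k)) = sumK m (fun k => sumK n (fun j => F j k)).
Proof.
  induction n; simpl.
  - rewrite sumK_zero. reflexivity.
  - rewrite sumK_S, IHn, <- sumK_plus. apply sumK_ext; intros. rewrite sumK_S. reflexivity.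
Qed.

Definition ev (j : nat) : nat -> R := upd (fun _ => 0) j 1.

Lemma ev_val j k : ev j k = if Nat.eqb k j then 1 else 0.
Proof. reflexivity. Qed.

Lemma sumK_delta n k (v : nat -> R) : (k < n)%nat ->
  sumK n (fun j => ev j k * v j) = v k.
Proof.
  induction n; intros Hk; [lia|]. rewrite sumK_S, ev_val.
  destruct (Nat.eq_dec k n).
  - subst. rewrite Nat.eqb_refl.
    rewrite (sumK_ext _ _ (fun _ => 0)). rewrite sumK_zero. lra.
    intros j Hj. rewrite ev_val. destruct (Nat.eqb_spec n j); [lia| lra].
  - destruct (Nat.eqb_spec k n); [lia|]. rewrite IHn by lia. lra.
Qed.

Lemma sumK_lin n (a x v : nat -> R) t :
  sumK n (fun k => a k * (x k + t * v k)) = sumK n (fun k => a k * x k) + t * sumK n (fun k => a k * v k).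
Proof.
  induction n; [rewrite ?sumK_0; lra|]. rewrite !sumK_S, IHn. lra.
Qed.

Definition contK (K : nat) (F : (nat -> R) -> R) (x : nat -> R) : Prop :=
  forall e, 0 < e -> exists d, 0 < d /\ forall y,
    (forall k, (k < K)%nat -> Rabs (y k - x k) < d) -> Rabs (F y - F x) < e.

Definition cont1 (g : R -> R) (y : R) : Prop :=
  forall e, 0 < e -> exists d, 0 < d /\ forall u, Rabs (u - y) < d -> Rabs (g u - g y) < e.

Lemma contK_ext K F G x : (forall y, F y = G y) -> contK K G x -> contK K F x.
Proof.
  intros H HG e He. destruct (HG e He) as [d [Hd Hy]]. exists d; split; auto.
  intros y Hy'. rewrite !H. auto.
Qed.

Lemma contK_const K (c : R) x : contK K (fun _ => c) x.
Proof. intros e He. exists 1. split; [lra|]. intros. rewrite Rminus_diag, Rabs_R0. auto. Qed.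

Lemma contK_coord K j x : (j < K)%nat -> contK K (fun y => y j) x.
Proof. intros Hj e He. exists e. split; auto. Qed.

Lemma contK_comp1 K F g x : contK K F x -> cont1 g (F x) -> contK K (fun y => g (F y)) x.
Proof.
  intros HF Hg e He. destruct (Hg e He) as [d [Hd H1]].
  destruct (HF d Hd) as [d' [Hd' H2]]. exists d'. split; auto.
Qed.

Lemma contK_comp2 K F G (h : R -> R -> R) x : contK K F x -> contK K G x ->
  (forall e, 0 < e -> exists d, 0 < d /\ forall u w, Rabs (u - F x) < d ->
     Rabs (w - G x) < d -> Rabs (h u w - h (F x) (G x)) < e) ->
  contK K (fun y => h (F y) (G y)) x.
Proof.
  intros HF HG Hh e He. destruct (Hh e He) as [d [Hd H1]].
  destruct (HF d Hd) as [d1 [Hd1 H2]]. destruct (HG d Hd) as [d2 [Hd2 H3]].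
  exists (Rmin d1 d2). split. apply Rmin_pos; auto.
  intros y Hy. apply H1.
  - apply H2. intros k Hk. specialize (Hy k Hk). pose proof (Rmin_l d1 d2). lra.
  - apply H3. intros k Hk. specialize (Hy k Hk). pose proof (Rmin_r d1 d2). lra.
Qed.

Lemma contK_plus K F G x : contK K F x -> contK K G x -> contK K (fun y => F y + G y) x.
Proof.
  intros HF HG. apply (contK_comp2 K F G Rplus); auto.
  intros e He. exists (e/2). split; [lra|]. intros u w H1 H2.
  apply Rabs_def2 in H1; apply Rabs_def2 in H2. apply Rabs_def1; lra.
Qed.

Lemma contK_minus K F G x : contK K F x -> contK K G x -> contK K (fun y => F y - G y) x.
Proof.
  intros HF HG. apply (contK_comp2 K F G Rminus); auto.
  intros e He. exists (e/2). split; [lra|]. intros u w H1 H2.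
  apply Rabs_def2 in H1; apply Rabs_def2 in H2. apply Rabs_def1; lra.
Qed.

Lemma mult_cont2 (u0 w0 : R) : forall e, 0 < e -> exists d, 0 < d /\ forall u w,
  Rabs (u - u0) < d -> Rabs (w - w0) < d -> Rabs (u * w - u0 * w0) < e.
Proof.
  intros e He.
  set (M := 1 + Rabs u0 + Rabs w0).
  assert (HM : 1 <= M) by (unfold M; pose proof (Rabs_pos u0); pose proof (Rabs_pos w0); lra).
  exists (Rmin 1 (e / (2 * M))). split.
  { apply Rmin_pos; [lra|]. apply Rdiv_lt_0_compat; lra. }
  intros u w H1 H2.
  set (d := Rmin 1 (e / (2 * M))) in *.
  assert (Hd1 : d <= 1) by apply Rmin_l.
  assert (Hd2 : d <= e / (2*M)) by apply Rmin_r.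
  replace (u * w - u0 * w0) with ((u-u0)*(w-w0) + u0*(w-w0) + w0*(u-u0)) by ring.
  eapply Rle_lt_trans. apply Rabs_triang.
  eapply Rle_lt_trans. apply Rplus_le_compat_r. apply Rabs_triang.
  rewrite !Rabs_mult.
  pose proof (Rabs_pos (u-u0)). pose proof (Rabs_pos (w-w0)).
  pose proof (Rabs_pos u0). pose proof (Rabs_pos w0).
  assert (Hdm : d * M <= e / 2).
  { apply (Rmult_le_compat_r M) in Hd2; [|lra].
    replace (e / (2*M) * M) with (e/2) in Hd2 by (field; lra). lra. }
  assert (Rabs (u - u0) * Rabs (w - w0) <= d * d) by (apply Rmult_le_compat; lra).
  assert (Rabs u0 * Rabs (w - w0) <= Rabs u0 * d) by (apply Rmult_le_compat_l; lra).
  assert (Rabs w0 * Rabs (u - u0) <= Rabs w0 * d) by (apply Rmult_le_compat_l; lra).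
  assert (d * d <= d * 1) by (apply Rmult_le_compat_l; lra).
  unfold M in Hdm. nra.
Qed.

Lemma contK_mult K F G x : contK K F x -> contK K G x -> contK K (fun y => F y * G y) x.
Proof. intros HF HG. apply (contK_comp2 K F G Rmult); auto. intros. apply mult_cont2; auto. Qed.

Lemma contK_scal K (c : R) F x : contK K F x -> contK K (fun y => c * F y) x.
Proof. intros HF. apply (contK_mult K (fun _ => c) F); auto. apply contK_const. Qed.

Lemma cont1_of_pt g y : continuity_pt g y -> cont1 g y.
Proof.
  intros H e He. destruct (H e He) as [d [Hd H1]]. exists d. split; auto.
  intros u Hu. destruct (Req_dec u y).
  - subst. rewrite Rminus_diag, Rabs_R0. auto.
  - apply H1. split. split; [exact I| auto]. exact Hu.
Qed.

Lemma cont1_inv y : y <> 0 -> cont1 Rinv y.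
Proof.
  intros Hy. apply (cont1_of_pt (fun u => / u)).
  apply (continuity_pt_inv id y). apply continuity_pt_id. exact Hy.
Qed.

Lemma cont1_ln y : 0 < y -> cont1 ln y.
Proof.
  intros Hy e He. destruct (ln_continue y Hy e He) as [d [Hd H1]].
  exists (Rmin d y). split. apply Rmin_pos; auto.
  intros u Hu. pose proof (Rmin_l d y). pose proof (Rmin_r d y).
  destruct (Req_dec u y).
  - subst. rewrite Rminus_diag, Rabs_R0. auto.
  - apply H1. split. split. apply Rabs_def2 in Hu. lra. auto.
    simpl. unfold R_dist. lra.
Qed.

Lemma contK_inv K F x : contK K F x -> F x <> 0 -> contK K (fun y => / F y) x.
Proof. intros HF H. apply (contK_comp1 K F Rinv); auto. apply cont1_inv; auto. Qed.

Lemma contK_div K F G x : contK K F x -> contK K G x -> G x <> 0 -> contK K (fun y => F y / G y) x.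
Proof. intros HF HG H. unfold Rdiv. apply contK_mult; auto. apply contK_inv; auto. Qed.

Lemma contK_ln K F x : contK K F x -> 0 < F x -> contK K (fun y => ln (F y)) x.
Proof. intros HF H. apply (contK_comp1 K F ln); auto. apply cont1_ln; auto. Qed.

Lemma contK_sumK K m (F : nat -> (nat -> R) -> R) x :
  (forall k, (k < m)%nat -> contK K (F k) x) -> contK K (fun y => sumK m (fun k => F k y)) x.
Proof.
  induction m; intros H.
  - apply (contK_ext _ _ (fun _ => 0)). intros; reflexivity. apply contK_const.
  - apply (contK_ext _ _ (fun y => sumK m (fun k => F k y) + F m y)).
    intros; apply sumK_S. apply contK_plus; auto.
Qed.

Definition posdata K (a : nat -> nat -> R) (d n : nat -> R) : Prop :=
  (forall k k', (k < K)%nat -> (k' < K)%nat -> 0 <= a k k') /\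
  (forall k, (k < K)%nat -> 0 <= d k) /\
  (forall k, (k < K)%nat -> 0 < n k) /\
  (forall k, (k < K)%nat -> d k <= a k k).

Definition nonnegP K (P : nat -> R) : Prop := forall k, (k < K)%nat -> 0 <= P k.

Definition Aof K (a : nat -> nat -> R) (n : nat -> R) P k :=
  sumK K (fun k' => a k k' * P k') + n k.
Definition Gof K (a : nat -> nat -> R) (d n : nat -> R) P k :=
  sumK K (fun k' => a k k' * P k') - d k * P k + n k.

Lemma AG_pos K a d n P k : posdata K a d n -> nonnegP K P -> (k < K)%nat ->
  0 < Gof K a d n P k /\ Gof K a d n P k <= Aof K a n P k.
Proof.
  intros [Ha [Hd [Hn Hda]]] HP Hk. unfold Gof, Aof.
  assert (H1 : a k k * P k <= sumK K (fun k' => a k k' * P k')).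
  { apply (sumK_ge_term K (fun k' => a k k' * P k')); auto.
    intros. apply Rmult_le_pos; auto. }
  assert (H2 : d k * P k <= a k k * P k) by (apply Rmult_le_compat_r; auto).
  assert (0 <= d k * P k) by (apply Rmult_le_pos; auto).
  specialize (Hn k Hk). lra.
Qed.

Lemma ln_concave X Y : 0 < X -> 0 < Y -> ln Y <= ln X + (Y - X) / X.
Proof.
  intros HX HY. pose proof (exp_ineq1_le (ln (Y / X))).
  rewrite exp_ln in H by (apply Rdiv_lt_0_compat; auto).
  rewrite ln_div in H by auto.
  replace ((Y - X) / X) with (Y / X - 1) by (field; lra). lra.
Qed.

Lemma ln2_pos : 0 < ln 2.
Proof. rewrite <- ln_1. apply ln_increasing; lra. Qed.

Lemma log2_concave X Y : 0 < X -> 0 < Y -> log2 Y <= log2 X + (Y - X) / (ln 2 * X).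
Proof.
  intros HX HY. unfold log2. pose proof ln2_pos. pose proof (ln_concave X Y HX HY).
  replace ((Y - X) / (ln 2 * X)) with (((Y - X) / X) / ln 2) by (field; lra).
  unfold Rdiv at 1 2 3. rewrite <- Rmult_plus_distr_r.
  apply Rmult_le_compat_r; [left; apply Rinv_0_lt_compat; auto| exact H0].
Qed.

Lemma log2_le X Y : 0 < X -> X <= Y -> log2 X <= log2 Y.
Proof.
  intros HX HXY. unfold log2. pose proof ln2_pos. unfold Rdiv.
  apply Rmult_le_compat_r; [left; apply Rinv_0_lt_compat; auto|].
  destruct HXY. left. apply ln_increasing; auto. subst; lra.
Qed.

Lemma sumK_aP_diff K (a : nat -> nat -> R) k (P P0 : nat -> R) :
  sumK K (fun k' => a k k' * (P k' - P0 k')) =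
  sumK K (fun k' => a k k' * P k') - sumK K (fun k' => a k k' * P0 k').
Proof.
  rewrite <- sumK_minus. apply sumK_ext. intros; ring.
Qed.

Lemma Rk_nonneg K c a d n P k : 0 < c -> posdata K a d n -> nonnegP K P -> (k < K)%nat ->
  0 <= R_k K c a d n P k.
Proof.
  intros Hc HD HP Hk. destruct (AG_pos K a d n P k HD HP Hk) as [H1 H2].
  unfold R_k, f_k, g_k. fold (Aof K a n P k). fold (Gof K a d n P k).
  pose proof (log2_le _ _ H1 H2). apply Rmult_le_pos; lra.
Qed.

Lemma Rk_le_Rhat K c a d n P P0 k : 0 < c -> posdata K a d n -> nonnegP K P -> nonnegP K P0 ->
  (k < K)%nat -> R_k K c a d n P k <= Rhat_k K c a d n P P0 k.
Proof.
  intros Hc HD HP HP0 Hk.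
  destruct (AG_pos K a d n P k HD HP Hk) as [H1 H2].
  destruct (AG_pos K a d n P0 k HD HP0 Hk) as [H3 H4].
  unfold R_k, Rhat_k, fhat_k, f_k. rewrite sumK_aP_diff.
  pose proof (log2_concave (Aof K a n P0 k) (Aof K a n P k)) as HH.
  unfold Aof in *. 
  replace (sumK K (fun k' => a k k' * P k') - sumK K (fun k' => a k k' * P0 k'))
    with (sumK K (fun k' => a k k' * P k') + n k - (sumK K (fun k' => a k k' * P0 k') + n k)) by ring.
  apply Rmult_le_compat_l; [lra|]. assert (HH' := HH ltac:(lra) ltac:(lra)). lra.
Qed.

Lemma Rbar_le_Rk K c a d n P P0 k : 0 < c -> posdata K a d n -> nonnegP K P -> nonnegP K P0 ->
  (k < K)%nat -> Rbar_k K c a d n P P0 k <= R_k K c a d n P k.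
Proof.
  intros Hc HD HP HP0 Hk.
  destruct (AG_pos K a d n P k HD HP Hk) as [H1 H2].
  destruct (AG_pos K a d n P0 k HD HP0 Hk) as [H3 H4].
  unfold R_k, Rbar_k, ghat_k, g_k. rewrite sumK_aP_diff.
  pose proof (log2_concave (Gof K a d n P0 k) (Gof K a d n P k) H3 H1) as HH.
  unfold Gof in *.
  replace (sumK K (fun k' => a k k' * P k') - sumK K (fun k' => a k k' * P0 k') - d k * (P k - P0 k))
    with (sumK K (fun k' => a k k' * P k') - d k * P k + n k - (sumK K (fun k' => a k k' * P0 k') - d k * P0 k + n k)) by ring.
  apply Rmult_le_compat_l; lra.
Qed.

Lemma sumK_aP_self K (a : nat -> nat -> R) k (P : nat -> R) :
  sumK K (fun k' => a k k' * (P k' - P k')) = 0.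
Proof. rewrite sumK_aP_diff. ring. Qed.

Lemma Rbar_self K c a d n P k : Rbar_k K c a d n P P k = R_k K c a d n P k.
Proof.
  unfold Rbar_k, R_k, ghat_k. rewrite sumK_aP_self.
  replace (0 - d k * (P k - P k)) with 0 by ring. unfold Rdiv. ring.
Qed.

Lemma Rhat_self K c a d n P k : Rhat_k K c a d n P P k = R_k K c a d n P k.
Proof.
  unfold Rhat_k, R_k, fhat_k. rewrite sumK_aP_self. unfold Rdiv. ring.
Qed.

Definition pndata K C0 (Delta beta : nat -> R) :=
  0 < C0 /\ (forall k, (k < K)%nat -> 1 <= Delta k) /\ (forall k, (k < K)%nat -> 0 < beta k).

Lemma PN_pos K c a d n C0 Delta beta P : 0 < c -> posdata K a d n -> pndata K C0 Delta beta ->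
  nonnegP K P -> 0 < PN K C0 Delta beta P (fun k => R_k K c a d n P k).
Proof.
  intros Hc HD [HC [HDe Hb]] HP. unfold PN.
  assert (0 <= sumK K (fun k => Delta k * P k)).
  { apply sumK_nonneg. intros k Hk. apply Rmult_le_pos; auto. specialize (HDe k Hk); lra. }
  assert (0 <= sumK K (fun k => beta k * R_k K c a d n P k)).
  { apply sumK_nonneg. intros k Hk. apply Rmult_le_pos. specialize (Hb k Hk); lra.
    apply Rk_nonneg; auto. }
  lra.
Qed.

Lemma EE_nonneg K c a d n C0 Delta beta P : 0 < c -> posdata K a d n -> pndata K C0 Delta beta ->
  nonnegP K P -> 0 <= EE K c a d n C0 Delta beta P.
Proof.
  intros Hc HD HN HP. unfold EE. apply Rdiv_le_0_compat.
  apply sumK_nonneg; intros; apply Rk_nonneg; auto.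
  apply PN_pos; auto.
Qed.

Lemma EEbar_self K c a d n C0 Delta beta P :
  EEbar K c a d n C0 Delta beta P P = EE K c a d n C0 Delta beta P.
Proof.
  unfold EEbar, EE, PN.
  rewrite (sumK_ext K (fun k => Rbar_k K c a d n P P k) (fun k => R_k K c a d n P k))
    by (intros; apply Rbar_self).
  rewrite (sumK_ext K (fun k => beta k * Rhat_k K c a d n P P k) (fun k => beta k * R_k K c a d n P k))
    by (intros; rewrite Rhat_self; auto).
  reflexivity.
Qed.

Lemma EEbar_le_EE K c a d n C0 Delta beta P P0 : 0 < c -> posdata K a d n ->
  pndata K C0 Delta beta -> nonnegP K P -> nonnegP K P0 ->
  0 <= EEbar K c a d n C0 Delta beta P P0 ->
  EEbar K c a d n C0 Delta beta P P0 <= EE K c a d n C0 Delta beta P.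
Proof.
  intros Hc HD HN HP HP0 H0.
  pose proof (PN_pos K c a d n C0 Delta beta P Hc HD HN HP) as HPN.
  destruct HN as [HC [HDe Hb]].
  unfold EEbar, EE in *.
  set (D := PN K C0 Delta beta P (fun k => R_k K c a d n P k)) in *.
  set (D' := PN K C0 Delta beta P (fun k => Rhat_k K c a d n P P0 k)) in *.
  set (x := sumK K (fun k => Rbar_k K c a d n P P0 k)) in *.
  set (y := sumK K (fun k => R_k K c a d n P k)).
  assert (HDD : D <= D').
  { unfold D, D', PN. apply Rplus_le_compat_l. apply sumK_le. intros k Hk.
    apply Rmult_le_compat_l. specialize (Hb k Hk); lra. apply Rk_le_Rhat; auto. }
  assert (Hxy : x <= y).
  { unfold x, y. apply sumK_le. intros. apply Rbar_le_Rk; auto. }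
  assert (HD' : 0 < D') by lra.
  assert (Hx : 0 <= x).
  { assert (x = x / D' * D') by (field; lra). rewrite H. apply Rmult_le_pos; lra. }
  apply (Rle_trans _ (x / D)).
  - unfold Rdiv. apply Rmult_le_compat_l; auto. apply Rinv_le_contravar; auto.
  - unfold Rdiv. apply Rmult_le_compat_r; auto. left; apply Rinv_0_lt_compat; auto.
Qed.

Ltac ck := repeat (first
  [ apply contK_const
  | apply contK_coord; assumption
  | apply contK_minus
  | apply contK_plus
  | apply contK_mult
  | apply contK_sumK; intros ]).

Lemma cont_Rk K c a d n x k : posdata K a d n -> nonnegP K x -> (k < K)%nat ->
  contK K (fun y => R_k K c a d n y k) x.
Proof.
  intros HD Hx Hk. destruct (AG_pos K a d n x k HD Hx Hk) as [H1 H2].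
  pose proof ln2_pos.
  unfold R_k, f_k, g_k, log2.
  apply contK_mult; [apply contK_const|]. apply contK_minus.
  - apply contK_div; [|apply contK_const| simpl; lra]. apply contK_ln; [ck| ].
    cbv beta; fold (Aof K a n x k). lra.
  - apply contK_div; [|apply contK_const| simpl; lra]. apply contK_ln; [ck| ].
    cbv beta; fold (Gof K a d n x k). lra.
Qed.

Lemma cont_EE K c a d n C0 Delta beta x : 0 < c -> posdata K a d n -> pndata K C0 Delta beta ->
  nonnegP K x -> contK K (EE K c a d n C0 Delta beta) x.
Proof.
  intros Hc HD HN Hx. unfold EE.
  apply contK_div.
  - apply contK_sumK. intros. apply cont_Rk; auto.
  - unfold PN. apply contK_plus; [ck|]. apply contK_sumK; intros.
    apply contK_mult; [apply contK_const|]. apply cont_Rk; auto.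
  - pose proof (PN_pos K c a d n C0 Delta beta x Hc HD HN Hx). lra.
Qed.

Lemma cont_EEbar2 K c a d n C0 Delta beta Q x : 0 < c -> posdata K a d n -> pndata K C0 Delta beta ->
  nonnegP K x -> nonnegP K Q -> contK K (fun P0 => EEbar K c a d n C0 Delta beta Q P0) x.
Proof.
  intros Hc HD HN Hx HQ. pose proof ln2_pos. unfold EEbar.
  apply contK_div.
  - apply contK_sumK. intros k Hk. destruct (AG_pos K a d n x k HD Hx Hk) as [H1 H2].
    unfold Rbar_k, ghat_k, g_k, log2.
    apply contK_mult; [apply contK_const|]. apply contK_minus; [apply contK_const|].
    apply contK_plus.
    + apply contK_div; [|apply contK_const| simpl; lra]. apply contK_ln; [ck| ].
      cbv beta; fold (Gof K a d n x k). lra.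
    + apply contK_div; [ck|ck|]. cbv beta; fold (Gof K a d n x k).
      apply Rgt_not_eq. apply Rmult_lt_0_compat; lra.
  - unfold PN. apply contK_plus; [ck|]. apply contK_sumK; intros k Hk.
    destruct (AG_pos K a d n x k HD Hx Hk) as [H1 H2].
    apply contK_mult; [apply contK_const|].
    unfold Rhat_k, fhat_k, f_k, log2.
    apply contK_mult; [apply contK_const|]. apply contK_minus; [|apply contK_const].
    apply contK_plus.
    + apply contK_div; [|apply contK_const| simpl; lra]. apply contK_ln; [ck| ].
      cbv beta; fold (Aof K a n x k). lra.
    + apply contK_div; [ck|ck|]. cbv beta; fold (Aof K a n x k).
      apply Rgt_not_eq. apply Rmult_lt_0_compat; lra.
  - assert (HH := PN_pos K c a d n C0 Delta beta Q Hc HD HN HQ).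
    destruct HN as [HC [HDe Hb]]. unfold PN in *.
    assert (sumK K (fun k => beta k * R_k K c a d n Q k) <= sumK K (fun k => beta k * Rhat_k K c a d n Q x k)).
    { apply sumK_le. intros k Hk. apply Rmult_le_compat_l. specialize (Hb k Hk); lra.
      apply Rk_le_Rhat; auto. }
    lra.
Qed.

Definition addv (x : nat -> R) (t : R) (v : nat -> R) : nat -> R := fun i => x i + t * v i.
Definition Bv K (a : nat -> nat -> R) (v : nat -> R) k := sumK K (fun k' => a k k' * v k').

Lemma Aof_addv K a n x t v k : Aof K a n (addv x t v) k = Aof K a n x k + t * Bv K a v k.
Proof. unfold Aof, addv, Bv. rewrite sumK_lin. ring. Qed.

Lemma Gof_addv K a d n x t v k :
  Gof K a d n (addv x t v) k = Gof K a d n x k + t * (Bv K a v k - d k * v k).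
Proof. unfold Gof, addv, Bv. rewrite sumK_lin. ring. Qed.

Lemma sumK_a_addv_diff K (a : nat -> nat -> R) x t v k :
  sumK K (fun k' => a k k' * (addv x t v k' - x k')) = t * Bv K a v k.
Proof.
  unfold Bv. rewrite <- sumK_scal. apply sumK_ext. intros. unfold addv. ring.
Qed.

Lemma is_derive_sumK m (F : nat -> R -> R) (Fd : nat -> R) t0 :
  (forall k, (k < m)%nat -> is_derive (F k) t0 (Fd k)) ->
  is_derive (fun t => sumK m (fun k => F k t)) t0 (sumK m Fd).
Proof.
  induction m; intros H.
  - rewrite sumK_0. apply (@is_derive_ext R_AbsRing R_NormedModule (fun _ => 0)). intros; reflexivity.
    auto_derive; auto.
  - rewrite sumK_S. apply (@is_derive_ext R_AbsRing R_NormedModule (fun t => plus (sumK m (fun k => F k t)) (F m t))).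
    intros; rewrite sumK_S; reflexivity.
    apply (is_derive_plus (fun t => sumK m (fun k => F k t)) (F m)); auto.
Qed.

Lemma is_derive_eqv (f : R -> R) (x l l' : R) : is_derive f x l -> l = l' -> is_derive f x l'.
Proof. intros H ->; auto. Qed.



Lemma deriv_ratio K C0 SDx SDv (beta : nat -> R) (F Fh : nat -> R -> R) (rd : nat -> R) :
  (forall k, (k < K)%nat -> is_derive (F k) 0 (rd k)) ->
  (forall k, (k < K)%nat -> is_derive (Fh k) 0 (rd k)) ->
  C0 + SDx + sumK K (fun k => beta k * Fh k 0) <> 0 ->
  is_derive (fun t => sumK K (fun k => F k t) / (C0 + (SDx + t * SDv) + sumK K (fun k => beta k * Fh k t))) 0
    ((sumK K rd * (C0 + SDx + sumK K (fun k => beta k * Fh k 0))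
      - sumK K (fun k => F k 0) * (SDv + sumK K (fun k => beta k * rd k)))
     / (C0 + SDx + sumK K (fun k => beta k * Fh k 0)) ^ 2).
Proof.
  intros HF HFh HM.
  assert (HD : is_derive (fun t => C0 + (SDx + t * SDv) + sumK K (fun k => beta k * Fh k t)) 0
     (SDv + sumK K (fun k => beta k * rd k))).
  { apply (@is_derive_ext R_AbsRing R_NormedModule (fun t => plus (C0 + (SDx + t * SDv)) (sumK K (fun k => beta k * Fh k t)))).
    intros; reflexivity.
    apply (is_derive_plus (fun t => C0 + (SDx + t * SDv)) (fun t => sumK K (fun k => beta k * Fh k t)) 0 SDv).
    + auto_derive. auto. ring.
    + apply (is_derive_sumK K (fun k t => beta k * Fh k t) (fun k => beta k * rd k)).
      intros k Hk. apply (@is_derive_ext R_AbsRing R_NormedModule (fun t => scal (beta k) (Fh k t))). intros; reflexivity.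
      apply (is_derive_scal (Fh k) 0 (beta k) (rd k)). auto. }
  pose proof (is_derive_sumK K F rd 0 HF) as HN.
  assert (HM' : C0 + (SDx + 0 * SDv) + sumK K (fun k => beta k * Fh k 0) <> 0).
  { rewrite Rmult_0_l, Rplus_0_r. exact HM. }
  pose proof (is_derive_div _ _ 0 _ _ HN HD HM') as HR.
  cbv beta in HR. rewrite Rmult_0_l, Rplus_0_r in HR. exact HR.
Qed.

Definition rdv K c a d n x v k :=
  c * (Bv K a v k / (ln 2 * Aof K a n x k) - (Bv K a v k - d k * v k) / (ln 2 * Gof K a d n x k)).

Definition M0 K c a d n C0 Delta beta x := PN K C0 Delta beta x (fun k => R_k K c a d n x k).

Definition Dval K c a d n C0 Delta beta x v :=
  (sumK K (rdv K c a d n x v) * M0 K c a d n C0 Delta beta x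
   - sumK K (fun k => R_k K c a d n x k) *
     (sumK K (fun k => Delta k * v k) + sumK K (fun k => beta k * rdv K c a d n x v k)))
  / (M0 K c a d n C0 Delta beta x) ^ 2.

Lemma deriv_r1 c A B G H : 0 < A -> 0 < G ->
  is_derive (fun t => c * (log2 (A + t * B) - log2 (G + t * H))) 0
    (c * (B / (ln 2 * A) - H / (ln 2 * G))).
Proof.
  intros HA HG. pose proof ln2_pos. unfold log2. auto_derive.
  - rewrite !Rmult_0_l, !Rplus_0_r. auto.
  - rewrite !Rmult_0_l, !Rplus_0_r. field. lra.
Qed.

Lemma deriv_rb c A B G H : 0 < A -> 0 < G ->
  is_derive (fun t => c * (log2 (A + t * B) - (log2 G + t * H / (ln 2 * G)))) 0
    (c * (B / (ln 2 * A) - H / (ln 2 * G))).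
Proof.
  intros HA HG. pose proof ln2_pos. unfold log2. auto_derive.
  - rewrite !Rmult_0_l, !Rplus_0_r. auto.
  - rewrite !Rmult_0_l, !Rplus_0_r. field. lra.
Qed.

Lemma deriv_rh c A B G H : 0 < A -> 0 < G ->
  is_derive (fun t => c * (log2 A + t * B / (ln 2 * A) - log2 (G + t * H))) 0
    (c * (B / (ln 2 * A) - H / (ln 2 * G))).
Proof.
  intros HA HG. pose proof ln2_pos. unfold log2. auto_derive.
  - rewrite !Rmult_0_l, !Rplus_0_r. auto.
  - rewrite !Rmult_0_l, !Rplus_0_r. field. lra.
Qed.

Lemma Rk_addv K c a d n x t v k :
  R_k K c a d n (addv x t v) k =
  c * (log2 (Aof K a n x k + t * Bv K a v k) - log2 (Gof K a d n x k + t * (Bv K a v k - d k * v k))).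
Proof.
  unfold R_k, f_k, g_k.
  change (c * (log2 (Aof K a n (addv x t v) k) - log2 (Gof K a d n (addv x t v) k)) =
    c * (log2 (Aof K a n x k + t * Bv K a v k) - log2 (Gof K a d n x k + t * (Bv K a v k - d k * v k)))).
  rewrite Aof_addv, Gof_addv. reflexivity.
Qed.

Lemma Rbar_addv K c a d n x t v k :
  Rbar_k K c a d n (addv x t v) x k =
  c * (log2 (Aof K a n x k + t * Bv K a v k) -
       (log2 (Gof K a d n x k) + t * (Bv K a v k - d k * v k) / (ln 2 * Gof K a d n x k))).
Proof.
  unfold Rbar_k, ghat_k, f_k, g_k.
  change (c * (log2 (Aof K a n (addv x t v) k) -
     (log2 (Gof K a d n x k) +
      (sumK K (fun k' => a k k' * (addv x t v k' - x k')) - d k * (addv x t v k - x k)) /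
      (ln 2 * Gof K a d n x k))) =
   c * (log2 (Aof K a n x k + t * Bv K a v k) -
       (log2 (Gof K a d n x k) + t * (Bv K a v k - d k * v k) / (ln 2 * Gof K a d n x k)))).
  rewrite Aof_addv, sumK_a_addv_diff.
  replace (t * Bv K a v k - d k * (addv x t v k - x k)) with (t * (Bv K a v k - d k * v k))
    by (unfold addv; ring).
  reflexivity.
Qed.

Lemma Rhat_addv K c a d n x t v k :
  Rhat_k K c a d n (addv x t v) x k =
  c * (log2 (Aof K a n x k) + t * Bv K a v k / (ln 2 * Aof K a n x k)
       - log2 (Gof K a d n x k + t * (Bv K a v k - d k * v k))).
Proof.
  unfold Rhat_k, fhat_k, f_k, g_k.
  change (c * (log2 (Aof K a n x k) +
      sumK K (fun k' => a k k' * (addv x t v k' - x k')) / (ln 2 * Aof K a n x k) -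
      log2 (Gof K a d n (addv x t v) k)) =
   c * (log2 (Aof K a n x k) + t * Bv K a v k / (ln 2 * Aof K a n x k)
       - log2 (Gof K a d n x k + t * (Bv K a v k - d k * v k)))).
  rewrite Gof_addv, sumK_a_addv_diff. reflexivity.
Qed.

Lemma PN_addv_form K C0 Delta beta x t v (r : nat -> R) :
  PN K C0 Delta beta (addv x t v) r =
  C0 + (sumK K (fun k => Delta k * x k) + t * sumK K (fun k => Delta k * v k)) + sumK K (fun k => beta k * r k).
Proof. unfold PN, addv. rewrite sumK_lin. reflexivity. Qed.

Lemma line_EE K c a d n C0 Delta beta x v : 0 < c -> posdata K a d n -> pndata K C0 Delta beta ->
  nonnegP K x ->
  is_derive (fun t => EE K c a d n C0 Delta beta (addv x t v)) 0 (Dval K c a d n C0 Delta beta x v).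
Proof.
  intros Hc HD HN Hx.
  set (rf := fun k t => c * (log2 (Aof K a n x k + t * Bv K a v k) - log2 (Gof K a d n x k + t * (Bv K a v k - d k * v k)))).
  apply (@is_derive_ext R_AbsRing R_NormedModule
    (fun t => sumK K (fun k => rf k t) /
       (C0 + (sumK K (fun k => Delta k * x k) + t * sumK K (fun k => Delta k * v k)) + sumK K (fun k => beta k * rf k t)))).
  { intros t. unfold EE.
    replace (fun k => R_k K c a d n (addv x t v) k) with (fun k => rf k t)
      by (apply functional_extensionality; intros; rewrite Rk_addv; reflexivity).
    rewrite PN_addv_form. reflexivity. }
  assert (H0 : (fun k => rf k 0) = (fun k => R_k K c a d n x k)).
  { apply functional_extensionality; intros k. unfold rf. rewrite !Rmult_0_l, !Rplus_0_r. reflexivity. }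
  eapply is_derive_eqv.
  apply (deriv_ratio K C0 _ _ beta rf rf (rdv K c a d n x v)).
  - intros k Hk. destruct (AG_pos K a d n x k HD Hx Hk) as [H1 H2]. apply deriv_r1; lra.
  - intros k Hk. destruct (AG_pos K a d n x k HD Hx Hk) as [H1 H2]. apply deriv_r1; lra.
  - rewrite (sumK_ext K (fun k => beta k * rf k 0) (fun k => beta k * R_k K c a d n x k))
      by (intros; rewrite (equal_f H0); reflexivity).
    pose proof (PN_pos K c a d n C0 Delta beta x Hc HD HN Hx). unfold PN in H. lra.
  - rewrite (sumK_ext K (fun k => beta k * rf k 0) (fun k => beta k * R_k K c a d n x k))
      by (intros; rewrite (equal_f H0); reflexivity).
    rewrite H0. reflexivity.
Qed.

Lemma line_EEbar K c a d n C0 Delta beta x v : 0 < c -> posdata K a d n -> pndata K C0 Delta beta ->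
  nonnegP K x ->
  is_derive (fun t => EEbar K c a d n C0 Delta beta (addv x t v) x) 0 (Dval K c a d n C0 Delta beta x v).
Proof.
  intros Hc HD HN Hx.
  set (rb := fun k t => c * (log2 (Aof K a n x k + t * Bv K a v k) -
       (log2 (Gof K a d n x k) + t * (Bv K a v k - d k * v k) / (ln 2 * Gof K a d n x k)))).
  set (rh := fun k t => c * (log2 (Aof K a n x k) + t * Bv K a v k / (ln 2 * Aof K a n x k)
       - log2 (Gof K a d n x k + t * (Bv K a v k - d k * v k)))).
  apply (@is_derive_ext R_AbsRing R_NormedModule
    (fun t => sumK K (fun k => rb k t) /
       (C0 + (sumK K (fun k => Delta k * x k) + t * sumK K (fun k => Delta k * v k)) + sumK K (fun k => beta k * rh k t)))).
  { intros t. unfold EEbar.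
    replace (fun k => Rbar_k K c a d n (addv x t v) x k) with (fun k => rb k t)
      by (apply functional_extensionality; intros; rewrite Rbar_addv; reflexivity).
    replace (fun k => Rhat_k K c a d n (addv x t v) x k) with (fun k => rh k t)
      by (apply functional_extensionality; intros; rewrite Rhat_addv; reflexivity).
    rewrite PN_addv_form. reflexivity. }
  assert (H0 : (fun k => rb k 0) = (fun k => R_k K c a d n x k)).
  { apply functional_extensionality; intros k. unfold rb. unfold Rdiv. rewrite !Rmult_0_l, !Rplus_0_r. reflexivity. }
  assert (H0' : (fun k => rh k 0) = (fun k => R_k K c a d n x k)).
  { apply functional_extensionality; intros k. unfold rh. unfold Rdiv. rewrite !Rmult_0_l, !Rplus_0_r. reflexivity. }
  eapply is_derive_eqv.
  apply (deriv_ratio K C0 _ _ beta rb rh (rdv K c a d n x v)).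
  - intros k Hk. destruct (AG_pos K a d n x k HD Hx Hk) as [H1 H2]. apply deriv_rb; lra.
  - intros k Hk. destruct (AG_pos K a d n x k HD Hx Hk) as [H1 H2]. apply deriv_rh; lra.
  - rewrite (sumK_ext K (fun k => beta k * rh k 0) (fun k => beta k * R_k K c a d n x k))
      by (intros; rewrite (equal_f H0'); reflexivity).
    pose proof (PN_pos K c a d n C0 Delta beta x Hc HD HN Hx). unfold PN in H. lra.
  - rewrite (sumK_ext K (fun k => beta k * rh k 0) (fun k => beta k * R_k K c a d n x k))
      by (intros; rewrite (equal_f H0'); reflexivity).
    rewrite H0. reflexivity.
Qed.

Definition Lin K (Phi : (nat -> R) -> R) : Prop :=
  forall v, Phi v = sumK K (fun j => Phi (ev j) * v j).

Lemma Lin_ext K Phi Psi : (forall v, Phi v = Psi v) -> Lin K Psi -> Lin K Phi.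
Proof.
  intros H HL v. rewrite H, HL. apply sumK_ext. intros. rewrite H. reflexivity.
Qed.

Lemma Lin_coord K k : (k < K)%nat -> Lin K (fun v => v k).
Proof. intros Hk v. rewrite sumK_delta; auto. Qed.

Lemma Lin_scal K (al : R) Psi : Lin K Psi -> Lin K (fun v => al * Psi v).
Proof.
  intros H v. rewrite H, <- sumK_scal. apply sumK_ext. intros. ring.
Qed.

Lemma Lin_scalr K (al : R) Psi : Lin K Psi -> Lin K (fun v => Psi v * al).
Proof.
  intros H v. rewrite H, <- sumK_scalr. apply sumK_ext. intros. ring.
Qed.

Lemma Lin_divr K (al : R) Psi : Lin K Psi -> Lin K (fun v => Psi v / al).
Proof. intros H. apply (Lin_scalr K (/ al) Psi H). Qed.

Lemma Lin_plus K Phi Psi : Lin K Phi -> Lin K Psi -> Lin K (fun v => Phi v + Psi v).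
Proof.
  intros H1 H2 v. rewrite H1, H2, <- sumK_plus. apply sumK_ext. intros. ring.
Qed.

Lemma Lin_minus K Phi Psi : Lin K Phi -> Lin K Psi -> Lin K (fun v => Phi v - Psi v).
Proof.
  intros H1 H2 v. rewrite H1, H2, <- sumK_minus. apply sumK_ext. intros. ring.
Qed.

Lemma Lin_sum K m (Psi : nat -> (nat -> R) -> R) :
  (forall k, (k < m)%nat -> Lin K (Psi k)) -> Lin K (fun v => sumK m (fun k => Psi k v)).
Proof.
  intros H v.
  rewrite (sumK_ext m (fun k => Psi k v) (fun k => sumK K (fun j => Psi k (ev j) * v j)))
    by (intros; apply H; auto).
  rewrite sumK_exchange. apply sumK_ext. intros. rewrite sumK_scalr. reflexivity.
Qed.

Lemma Lin_Bv K a k : Lin K (fun v => Bv K a v k).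
Proof.
  unfold Bv. apply (Lin_sum K K (fun k' v => a k k' * v k')). intros k' Hk'.
  apply (Lin_scal K (a k k') (fun v => v k')). apply Lin_coord; auto.
Qed.

Lemma Lin_Dval K c a d n C0 Delta beta x : Lin K (Dval K c a d n C0 Delta beta x).
Proof.
  unfold Dval. apply Lin_divr. apply Lin_minus.
  - apply Lin_scalr. apply (Lin_sum K K (fun k v => rdv K c a d n x v k)). intros k Hk.
    unfold rdv. apply Lin_scal. apply Lin_minus.
    + apply Lin_divr. apply Lin_Bv.
    + apply Lin_divr. apply Lin_minus. apply Lin_Bv.
      apply (Lin_scal K (d k) (fun v => v k)). apply Lin_coord; auto.
  - apply Lin_scal. apply Lin_plus.
    + apply (Lin_sum K K (fun k v => Delta k * v k)). intros k Hk.
      apply (Lin_scal K (Delta k) (fun v => v k)). apply Lin_coord; auto.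
    + apply (Lin_sum K K (fun k v => beta k * rdv K c a d n x v k)). intros k Hk.
      apply (Lin_scal K (beta k) (fun v => rdv K c a d n x v k)).
      unfold rdv. apply Lin_scal. apply Lin_minus.
      * apply Lin_divr. apply Lin_Bv.
      * apply Lin_divr. apply Lin_minus. apply Lin_Bv.
        apply (Lin_scal K (d k) (fun v => v k)). apply Lin_coord; auto.
Qed.

Lemma upd_addv x j t : upd x j t = addv x (t - x j) (ev j).
Proof.
  apply functional_extensionality. intros i. unfold upd, addv. rewrite ev_val.
  destruct (Nat.eqb i j) eqn:E.
  - apply Nat.eqb_eq in E. subst. ring.
  - ring.
Qed.

Lemma partial_EE K c a d n C0 Delta beta x j : 0 < c -> posdata K a d n -> pndata K C0 Delta beta ->
  nonnegP K x ->
  partial (EE K c a d n C0 Delta beta) x j = Dval K c a d n C0 Delta beta x (ev j).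
Proof.
  intros Hc HD HN Hx. unfold partial. apply is_derive_unique.
  apply (@is_derive_ext R_AbsRing R_NormedModule
    (fun t => (fun s => EE K c a d n C0 Delta beta (addv x s (ev j))) ((fun t => t - x j) t))).
  { intros t. simpl. rewrite upd_addv. reflexivity. }
  eapply is_derive_eqv.
  apply (is_derive_comp (fun s => EE K c a d n C0 Delta beta (addv x s (ev j))) (fun t => t - x j)).
  - simpl. rewrite Rminus_diag. apply line_EE; auto.
  - auto_derive; auto.
  - simpl. apply (@scal_one R_Ring R_ModuleSpace).
Qed.

Lemma deriv_nonpos (phi : R -> R) D : is_derive phi 0 D ->
  (forall t, 0 < t <= 1 -> phi t <= phi 0) -> D <= 0.
Proof.
  intros Hd Hle. apply is_derive_Reals in Hd.
  destruct (Rle_or_lt D 0) as [H|H]; auto. exfalso.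
  destruct (Hd (D/2) ltac:(lra)) as [del Hdel].
  set (h := Rmin (del/2) 1).
  assert (Hh0 : 0 < h) by (apply Rmin_pos; [pose proof (cond_pos del); lra| lra]).
  assert (Hh1 : h <= 1) by apply Rmin_r.
  assert (Hh2 : h <= del/2) by apply Rmin_l.
  specialize (Hdel h ltac:(lra)).
  assert (Rabs h < del) by (rewrite Rabs_pos_eq; [pose proof (cond_pos del); lra| lra]).
  specialize (Hdel H0). rewrite Rplus_0_l in Hdel.
  apply Rabs_def2 in Hdel. destruct Hdel as [_ Hdel].
  specialize (Hle h ltac:(lra)).
  assert ((phi h - phi 0) / h <= 0).
  { unfold Rdiv. apply Rmult_le_0_r; [lra| left; apply Rinv_0_lt_compat; auto]. }
  lra.
Qed.

Lemma closed_ineq K h Pseq Pst : contK K h Pst -> (forall m, h (Pseq m) <= 0) ->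
  limit_point K Pseq Pst -> h Pst <= 0.
Proof.
  intros Hc Hm Hl. destruct (Rle_or_lt (h Pst) 0) as [H|H]; auto. exfalso.
  destruct (Hc (h Pst) H) as [del [Hdel Hy]].
  destruct (Hl del Hdel O) as [m [_ Hmk]].
  specialize (Hy (Pseq m) Hmk). specialize (Hm m). apply Rabs_def2 in Hy. lra.
Qed.

Lemma feas_conv K Pmax a d n gam x Q t : feasible K Pmax a d n gam x -> feasible K Pmax a d n gam Q ->
  0 <= t <= 1 -> feasible K Pmax a d n gam (addv x t (fun i => Q i - x i)).
Proof.
  intros Hx HQ Ht k Hk. destruct (Hx k Hk) as [[H1 H2] H3]. destruct (HQ k Hk) as [[H4 H5] H6].
  unfold addv. rewrite sumK_lin, sumK_aP_diff. split; [split; nra|].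
  set (Sx := sumK K (fun k' => a k k' * x k')) in *.
  set (SQ := sumK K (fun k' => a k k' * Q k')) in *.
  replace (gam k * (Sx + t * (SQ - Sx) + n k) - (1 + gam k) * d k * (x k + t * (Q k - x k)))
    with ((1 - t) * (gam k * (Sx + n k) - (1 + gam k) * d k * x k) + t * (gam k * (SQ + n k) - (1 + gam k) * d k * Q k)) by ring.
  assert (0 <= 1 - t) by lra.
  assert ((1 - t) * (gam k * (Sx + n k) - (1 + gam k) * d k * x k) <= 0) by (apply Rmult_le_0_l; lra).
  assert (t * (gam k * (SQ + n k) - (1 + gam k) * d k * Q k) <= 0) by (apply Rmult_le_0_l; lra).
  lra.
Qed.

Ltac ck2 := repeat (first
  [ apply contK_const
  | apply contK_coord; assumption
  | apply contK_minus
  | apply contK_plus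
  | apply contK_mult
  | apply contK_sumK; intros ]).

Theorem theorem1 (K : nat) (c Pmax : R) (a : nat -> nat -> R)
  (d n gam : nat -> R) (C0 : R) (Delta beta : nat -> R) :
  (1 <= K)%nat -> 0 < c -> 0 < Pmax ->
  (forall k k', (k < K)%nat -> (k' < K)%nat -> 0 <= a k k') ->
  (forall k, (k < K)%nat -> 0 <= d k) ->
  (forall k, (k < K)%nat -> 0 < n k) ->
  (forall k, (k < K)%nat -> d k <= a k k) ->
  (forall k, (k < K)%nat -> 0 <= gam k) ->
  0 < C0 ->
  (forall k, (k < K)%nat -> 1 <= Delta k) ->
  (forall k, (k < K)%nat -> 0 < beta k) ->
  (exists P, feasible K Pmax a d n gam P) ->
  forall Pseq : nat -> nat -> R,
    feasible K Pmax a d n gam (Pseq O) ->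
    (forall m : nat,
       is_argmax_on (feasible K Pmax a d n gam)
         (fun P => EEbar K c a d n C0 Delta beta P (Pseq m))
         (Pseq (S m))) ->
    forall Pst : nat -> R,
      limit_point K Pseq Pst ->
      stationary K (feasible K Pmax a d n gam)
        (EE K c a d n C0 Delta beta) Pst.
Proof.
  intros HK Hc HPmax Ha Hd Hn Hda Hg HC0 HDe Hb Hex Pseq H0 Hmax Pst Hlim.
  assert (HD : posdata K a d n) by (repeat split; auto).
  assert (HN : pndata K C0 Delta beta) by (repeat split; auto).
  assert (Hnn : forall P, feasible K Pmax a d n gam P -> nonnegP K P).
  { intros P HP k Hk. apply (HP k Hk). }
  assert (Hfeas : forall m, feasible K Pmax a d n gam (Pseq m)).
  { intros [|m]; auto. apply (Hmax m). }
  assert (Hmono : forall m, EE K c a d n C0 Delta beta (Pseq m) <= EE K c a d n C0 Delta beta (Pseq (S m))).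
  { intros m. destruct (Hmax m) as [_ Hm]. specialize (Hm (Pseq m) (Hfeas m)). simpl in Hm.
    rewrite EEbar_self in Hm.
    pose proof (EE_nonneg K c a d n C0 Delta beta (Pseq m) Hc HD HN (Hnn _ (Hfeas m))).
    eapply Rle_trans. exact Hm. apply EEbar_le_EE; auto. lra. }
  assert (Hmono2 : forall m j, (m <= j)%nat -> EE K c a d n C0 Delta beta (Pseq m) <= EE K c a d n C0 Delta beta (Pseq j)).
  { intros m j Hmj. induction Hmj. lra. eapply Rle_trans. exact IHHmj. apply Hmono. }
  assert (Hfst : feasible K Pmax a d n gam Pst).
  { intros k Hk. split; [split|].
    - assert (0 - Pst k <= 0); [|lra].
      apply (closed_ineq K (fun P => 0 - P k) Pseq Pst); auto.
      ck2. intros m. destruct (Hfeas m k Hk) as [[? ?] ?]. lra.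
    - assert (Pst k - Pmax <= 0); [|lra].
      apply (closed_ineq K (fun P => P k - Pmax) Pseq Pst); auto.
      ck2. intros m. destruct (Hfeas m k Hk) as [[? ?] ?]. lra.
    - apply (closed_ineq K (fun P => gam k * (sumK K (fun k' => a k k' * P k') + n k) - (1 + gam k) * d k * P k) Pseq Pst); auto.
      ck2. intros m. destruct (Hfeas m k Hk) as [[? ?] ?]. lra. }
  assert (Hnst : nonnegP K Pst) by auto.
  assert (Hup : forall m, EE K c a d n C0 Delta beta (Pseq m) <= EE K c a d n C0 Delta beta Pst).
  { intros m0. destruct (Rle_or_lt (EE K c a d n C0 Delta beta (Pseq m0)) (EE K c a d n C0 Delta beta Pst)) as [H|H]; auto.
    exfalso.
    destruct (cont_EE K c a d n C0 Delta beta Pst Hc HD HN Hnst _ (Rlt_Rminus _ _ H)) as [del [Hdel Hy]].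
    destruct (Hlim del Hdel m0) as [j [Hj Hjk]].
    specialize (Hy _ Hjk). specialize (Hmono2 _ _ Hj). apply Rabs_def2 in Hy. lra. }
  assert (Hbar : forall Q, feasible K Pmax a d n gam Q ->
    EEbar K c a d n C0 Delta beta Q Pst <= EE K c a d n C0 Delta beta Pst).
  { intros Q HQ. destruct (Rle_or_lt (EEbar K c a d n C0 Delta beta Q Pst) (EE K c a d n C0 Delta beta Pst)) as [H|H]; auto.
    exfalso.
    destruct (cont_EEbar2 K c a d n C0 Delta beta Q Pst Hc HD HN Hnst (Hnn _ HQ) _ (Rlt_Rminus _ _ H)) as [del [Hdel Hy]].
    destruct (Hlim del Hdel O) as [m [_ Hmk]].
    specialize (Hy _ Hmk). apply Rabs_def2 in Hy.
    destruct (Hmax m) as [Hf1 Hm1]. specialize (Hm1 Q HQ). simpl in Hm1.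
    assert (HE : 0 <= EEbar K c a d n C0 Delta beta (Pseq (S m)) (Pseq m)).
    { pose proof (Hm1' := (proj2 (Hmax m)) (Pseq m) (Hfeas m)). simpl in Hm1'.
      rewrite EEbar_self in Hm1'.
      pose proof (EE_nonneg K c a d n C0 Delta beta (Pseq m) Hc HD HN (Hnn _ (Hfeas m))). lra. }
    pose proof (EEbar_le_EE K c a d n C0 Delta beta (Pseq (S m)) (Pseq m) Hc HD HN
      (Hnn _ (Hfeas (S m))) (Hnn _ (Hfeas m)) HE).
    specialize (Hup (S m)). lra. }
  split; auto. intros Q HQ.
  set (v := fun i => Q i - Pst i).
  rewrite (sumK_ext K _ (fun k => Dval K c a d n C0 Delta beta Pst (ev k) * v k)).
  2: { intros k Hk. rewrite partial_EE; auto. }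
  rewrite <- (Lin_Dval K c a d n C0 Delta beta Pst v).
  apply (deriv_nonpos (fun t => EEbar K c a d n C0 Delta beta (addv Pst t v) Pst)).
  - apply line_EEbar; auto.
  - intros t Ht.
    replace (addv Pst 0 v) with Pst.
    2: { apply functional_extensionality. intros i. unfold addv. ring. }
    rewrite EEbar_self. apply Hbar. apply feas_conv; auto. lra.
Qed.
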